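(* (Soundness.) Every branch that is refutable in the tableau calculus $\mathcal{T}$ described in the context is unsatisfiable.
   Context: Types: there is a countable set of base types, among them a distinguished base type $o$; the other base types are sorts ($\alpha$ ranges over sorts). Every base type is a type, and if $\sigma,\tau$ are types then $\sigma\tau$ is a type (functions from $\sigma$ to $\tau$; $\sigma\tau\mu=\sigma(\tau\mu)$). Countably many names, each with a unique type, infinitely many of each type. Terms: names; $st:\mu$ if $s:\tau\mu,t:\tau$; $\lambda x.t:\sigma\tau$ if $x:\sigma$ name, $t:\tau$. Logical constants: $\neg:oo$ and $=_\sigma:\sigma\sigma o$ for each type $\sigma$; other names are variables. Formulas are terms of type $o$; $s=_\sigma t$ is $(=_\sigma s)t$, $s\neq_\sigma t$ is $\neg(s=_\sigma t)$. Semantics: a frame $\mathcal{D}$ maps each type to a nonempty set with $\mathcal{D}(\sigma\tau)\subseteq(\mathcal{D}\sigma\to\mathcal{D}\tau)$. An assignment $\mathcal{I}$ into $\mathcal{D}$ extends $\mathcal{D}$ and maps each name $x:\sigma$ into $\mathcal{D}\sigma$; $\mathcal{I}^x_a$ is the update at $x$. Partial evaluation: $\hat{\mathcal{I}}x=\mathcal{I}x$; $\hat{\mathcal{I}}(st)=(\hat{\mathcal{I}}s)(\hat{\mathcal{I}}t)$ when both defined; $\hat{\mathcal{I}}(\lambda x.s)=f$ if $f\in\mathcal{D}(\sigma\tau)$ and $\widehat{\mathcal{I}^x_a}s=fa$ for all $a\in\mathcal{D}\sigma$. An interpretation is an assignment with total evaluation. Logical: $\mathcal{I}o=\{0,1\}$,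 $\mathcal{I}(\neg)$ negation, $\mathcal{I}(=_\sigma)$ identity. A model of a set $A$ of formulas is a logical interpretation with $\hat{\mathcal{I}}s=1$ for all $s\in A$; satisfiable = has a model. Normalization: fixed type-preserving total $[\cdot]$ on terms; $s$ normal iff $[s]=s$; (N1) $[[s]]=[s]$; (N2) $[[s]t]=[st]$; (N3) $[xs_1\dots s_n]=x[s_1]\dots[s_n]$ for a name $x$, $n\ge0$, $xs_1\dots s_n$ of base type; (N4) $\hat{\mathcal{I}}[s]=\hat{\mathcal{I}}s$ for every interpretation. Tableau calculus $\mathcal{T}$: a branch is a set of normal formulas. A rule instance $A/A_1\dots A_n$: $A$ a finite branch containing the premises, $A_i=A\cup$(formulas of the $i$-th alternative). Rules ($x$ a variable): (DN) $\neg\neg s$ / $s$. (BQ) $s=_ot$ / $\{s,t\}\mid\{\neg s,\neg t\}$. (BE) $s\neq_o t$ / $\{s,\neg t\}\mid\{\neg s,t\}$. (FQ) $s=_{\sigma\tau}t$ / $[su]=[tu]$, $u:\sigma$ normal. (FE) $s\neq_{\sigma\tau}t$ / $[sx]\neq[tx]$, $x:\sigma$ not free in $A$. (Mat) $xs_1\dots s_n,\neg xt_1\dots t_n$ / $s_1\neq t_1\mid\dots\mid s_n\neq t_n$ ($n\ge 0$). (Dec) $xs_1\dots s_n\neq_\alpha xt_1\dots t_n$ / $s_1\neq t_1\mid\dots\mid s_n\neq t_n$ ($n\ge0$). (Con) $s=_\alpha t,u\neq_\alpha v$ / $\{s\neq u,t\neq u\}\mid\{s\neq v,t\neq v\}$.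 $A$ is closed if $x,\neg x\in A$ for a variable $x:o$ or $x\neq_\alpha x\in A$ for a variable $x:\alpha$. Restrictions: (1) instances with $A$ closed are admitted only for Mat or Dec with $n=0$; (2) FE on $s\neq t\in A$ only if no variable $x$ has $[sx]\neq[tx]\in A$. Refutable branches: least set such that if $A/A_1\dots A_n$ is an admitted instance and all $A_i$ are refutable, then $A$ is refutable. *)

(* Defs.v *)
From mathcomp Require Import ssreflect ssrfun ssrbool eqtype choice.
From Stdlib Require Import List PeanoNat.
Import ListNotations.

Set Implicit Arguments.
Unset Strict Implicit.

Section STT.

(** The sorts: a countable set of base types other than [o].
    Base types are [TO] (= o) and [TS a] for [a : S]. *)
Variable S : countType.

Inductive ty : Type :=
| TO : ty
| TS : S -> ty
| Arr : ty -> ty -> ty.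

Definition ty_eq_dec (s t : ty) : {s = t} + {s <> t}.
Proof. decide equality. exact: eq_comparable. Defined.

(** Names: [Var T n] are the variables (infinitely many of each type),
    [NegC] is the constant [neg : oo], [EqC T] is [=_T : T T o]. *)
Inductive name : Type :=
| Var : ty -> nat -> name
| NegC : name
| EqC : ty -> name.

Definition nty (x : name) : ty :=
  match x with
  | Var T _ => T
  | NegC => Arr TO TO
  | EqC T => Arr T (Arr T TO)
  end.

Definition is_var (x : name) : Prop :=
  match x with Var _ _ => True | _ => False end.

Definition name_eq_dec (x y : name) : {x = y} + {x <> y}.
Proof. decide equality; try apply Nat.eq_dec; apply ty_eq_dec. Defined.

Inductive term : Type :=
| N : name -> term
| App : term -> term -> term
| Lam : name -> term -> term.

Inductive has_ty : term -> ty -> Prop :=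
| ty_N x : has_ty (N x) (nty x)
| ty_App s t sg tau : has_ty s (Arr sg tau) -> has_ty t sg -> has_ty (App s t) tau
| ty_Lam x s tau : has_ty s tau -> has_ty (Lam x s) (Arr (nty x) tau).

Definition is_base (T : ty) : Prop := T = TO \/ exists a, T = TS a.

Fixpoint free (y : name) (s : term) : Prop :=
  match s with
  | N x => x = y /\ is_var x
  | App s t => free y s \/ free y t
  | Lam x s => x <> y /\ free y s
  end.

Fixpoint apps (s : term) (l : list term) : term :=
  match l with [] => s | t :: l => apps (App s t) l end.

Fixpoint arrows (l : list ty) (T : ty) : ty :=
  match l with [] => T | s :: l => Arr s (arrows l T) end.

Definition neg (s : term) : term := App (N NegC) s.
Definition eqn (T : ty) (s t : term) : term := App (App (N (EqC T)) s) t.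
Definition neq (T : ty) (s t : term) : term := neg (eqn T s t).

(** A frame: nonempty carriers, with [D (Arr s t)] a set of functions
    [D s -> D t] (represented via an extensional, hence injective,
    application map). *)
Record frame : Type := {
  dom : ty -> Type;
  app : forall s t, dom (Arr s t) -> dom s -> dom t;
  app_ext : forall s t (f g : dom (Arr s t)), (forall a, app f a = app g a) -> f = g;
  dom_ne : forall t, inhabited (dom t)
}.

Definition valuation (F : frame) := forall x : name, dom F (nty x).

Definition upd (F : frame) (I : valuation F) (x : name) (a : dom F (nty x))
  : valuation F :=
  fun y => match name_eq_dec x y with
           | left e => eq_rect x (fun z => dom F (nty z)) a y e
           | right _ => I y
           end.

(** Partial evaluation [eval F I s T v] : "Î s is defined and equals v". *)
Inductive eval (F : frame) : valuation F -> term -> forall T, dom F T -> Prop :=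
| ev_N I x : eval I (N x) (I x)
| ev_App I s t sg tau (f : dom F (Arr sg tau)) (a : dom F sg) :
    eval I s f -> eval I t a -> eval I (App s t) (app f a)
| ev_Lam I x s tau (f : dom F (Arr (nty x) tau)) :
    (forall a : dom F (nty x), eval (upd I a) s (app f a)) ->
    eval I (Lam x s) f.

Definition interpretation (F : frame) (I : valuation F) : Prop :=
  forall s T, has_ty s T -> exists v : dom F T, eval I s v.

(** Logical: [D o] is {0,1} (via the bijection [tv], 1 = true),
    [neg] is negation and [=_T] is identity. *)
Definition logical (F : frame) (I : valuation F) (tv : dom F TO -> bool) : Prop :=
  bijective tv /\
  (forall a : dom F TO, tv (@app F TO TO (I NegC) a) = negb (tv a)) /\
  (forall T (a b : dom F T),
      tv (@app F T TO (@app F T (Arr T TO) (I (EqC T)) a) b) = true <-> a = b).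

Definition satisfiable (A : term -> Prop) : Prop :=
  exists (F : frame) (I : valuation F) (tv : dom F TO -> bool),
    interpretation I /\ logical I tv /\
    forall s, A s -> exists v : dom F TO, eval I s v /\ tv v = true.

Section Norm.
Variable nf : term -> term.

Definition nf_type_preserving : Prop :=
  forall s T, has_ty s T -> has_ty (nf s) T.
Definition N1 : Prop := forall s T, has_ty s T -> nf (nf s) = nf s.
Definition N2 : Prop :=
  forall s t T, has_ty (App s t) T -> nf (App (nf s) t) = nf (App s t).
Definition N3 : Prop :=
  forall x ss T, has_ty (apps (N x) ss) T -> is_base T ->
    nf (apps (N x) ss) = apps (N x) (map nf ss).
Definition N4 : Prop :=
  forall (F : frame) (I : valuation F), interpretation I ->
    forall s T (v : dom F T), has_ty s T -> (eval I (nf s) v <-> eval I s v).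

Definition normal (s : term) : Prop := nf s = s.
Definition branch (A : term -> Prop) : Prop :=
  forall s, A s -> has_ty s TO /\ normal s.
Definition finite (A : term -> Prop) : Prop :=
  exists l : list term, forall s, A s <-> In s l.

Inductive rule : Type :=
| RDN | RBQ | RBE | RFQ | RFE | RMat (n : nat) | RDec (n : nat) | RCon.

Definition lhs3 (p : ty * (term * term)) := p.2.1.
Definition rhs3 (p : ty * (term * term)) := p.2.2.
Definition alt3 (p : ty * (term * term)) : list term := [neq p.1 p.2.1 p.2.2].

(** [inst A r alts]: premises of rule [r] are in [A]; [alts] lists the
    formulas added in each alternative. Restriction (2) is built into FE. *)
Inductive inst (A : term -> Prop) : rule -> list (list term) -> Prop :=
| i_DN s : A (neg (neg s)) -> inst A RDN [[s]]
| i_BQ s t : A (eqn TO s t) -> inst A RBQ [[s; t]; [neg s; neg t]]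
| i_BE s t : A (neq TO s t) -> inst A RBE [[s; neg t]; [neg s; t]]
| i_FQ sg tau s t u :
    A (eqn (Arr sg tau) s t) -> has_ty u sg -> normal u ->
    inst A RFQ [[eqn tau (nf (App s u)) (nf (App t u))]]
| i_FE sg tau s t x :
    A (neq (Arr sg tau) s t) -> is_var x -> nty x = sg ->
    ~ (exists r, A r /\ free x r) ->
    ~ (exists y, is_var y /\ nty y = sg /\
                 A (neq tau (nf (App s (N y))) (nf (App t (N y))))) ->
    inst A RFE [[neq tau (nf (App s (N x))) (nf (App t (N x)))]]
| i_Mat x (l : list (ty * (term * term))) :
    is_var x -> nty x = arrows (map fst l) TO ->
    A (apps (N x) (map lhs3 l)) -> A (neg (apps (N x) (map rhs3 l))) ->
    inst A (RMat (length l)) (map alt3 l)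
| i_Dec a x (l : list (ty * (term * term))) :
    is_var x -> nty x = arrows (map fst l) (TS a) ->
    A (neq (TS a) (apps (N x) (map lhs3 l)) (apps (N x) (map rhs3 l))) ->
    inst A (RDec (length l)) (map alt3 l)
| i_Con a s t u v :
    A (eqn (TS a) s t) -> A (neq (TS a) u v) ->
    inst A RCon [[neq (TS a) s u; neq (TS a) t u];
                 [neq (TS a) s v; neq (TS a) t v]].

Definition closed (A : term -> Prop) : Prop :=
  (exists x, is_var x /\ nty x = TO /\ A (N x) /\ A (neg (N x))) \/
  (exists x a, is_var x /\ nty x = TS a /\ A (neq (TS a) (N x) (N x))).

(** Admitted rule instance: [A] a finite branch, restriction (1). *)
Definition admitted (A : term -> Prop) (r : rule) (alts : list (list term)) : Prop :=
  branch A /\ finite A /\ inst A r alts /\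
  (closed A -> r = RMat 0 \/ r = RDec 0).

Inductive refutable : (term -> Prop) -> Prop :=
| ref_intro A r alts :
    admitted A r alts ->
    (forall alt, In alt alts -> refutable (fun s => A s \/ In s alt)) ->
    refutable A.

End Norm.
End STT.

(* Main.v *)
Require Import Defs.
From mathcomp Require Import ssreflect ssrfun ssrbool eqtype choice.
From Stdlib Require Import List Eqdep_dec Classical.
Import ListNotations.
Set Implicit Arguments.
Unset Strict Implicit.

Section Sem.
Variable S : countType.
Variable F : frame S.
Implicit Types (s t h : term S) (T U : ty S) (x y : name S).

Lemma inj2 T (a b : dom F T) : existT (dom F) T a = existT (dom F) T b -> a = b.
Proof. apply: inj_pair2_eq_dec. exact: (@ty_eq_dec S). Qed.
Arguments inj2 [T a b] _.

Lemma has_ty_uniq s T1 T2 : has_ty s T1 -> has_ty s T2 -> T1 = T2.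
Proof.
  move=> H; elim: H T2 => [x|s' t sg tau _ IH1 _ IH2|x s' tau _ IH] T2 H2; inversion H2; subst => //.
  - match goal with H: has_ty s' _ |- _ => have := IH1 _ H end. by case.
  - match goal with H: has_ty s' _ |- _ => by rewrite (IH _ H) end.
Qed.

Lemma ev_N_inv (I : valuation F) x T (v : dom F T) :
  eval I (N x) v -> existT (dom F) T v = existT (dom F) (nty x) (I x).
Proof. move=> H; inversion H; subst. by []. Qed.

Lemma ev_App_inv (I : valuation F) s t T (v : dom F T) :
  eval I (App s t) v -> exists sg (f : dom F (Arr sg T)) (a : dom F sg),
    eval I s f /\ eval I t a /\ v = Defs.app f a.
Proof.
  move=> H; inversion H; subst.
  match goal with E: existT _ _ _ = existT _ _ _ |- _ => have E' := inj_pair2_eq_dec _ (@ty_eq_dec S) _ _ _ _ E end.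
  subst. by do 3 eexists; eauto.
Qed.

Lemma ev_Lam_inv (I : valuation F) x s T (v : dom F T) :
  eval I (Lam x s) v -> exists tau (f : dom F (Arr (nty x) tau)),
    existT (dom F) T v = existT (dom F) _ f /\
    forall a, eval (upd I a) s (Defs.app f a).
Proof.
  move=> H; inversion H; subst.
  match goal with E: existT _ _ _ = existT _ _ _ |- _ => have E' := inj_pair2_eq_dec _ (@ty_eq_dec S) _ _ _ _ E end.
  subst. by do 2 eexists; eauto.
Qed.

Lemma eval_fun (I : valuation F) s T1 (v1 : dom F T1) :
  eval I s v1 -> forall T2 (v2 : dom F T2), eval I s v2 ->
  existT (dom F) T1 v1 = existT (dom F) T2 v2.
Proof.
  elim => {I s T1 v1}.
  - move=> I x T2 v2 /ev_N_inv ->. by [].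
  - move=> I s t sg tau f a _ IH1 _ IH2 T2 v2 /ev_App_inv [sg' [f' [a' [H1 [H2 ->]]]]].
    move: (IH1 _ _ H1) (IH2 _ _ H2) => E1 E2.
    have Esg : sg = sg' by move: (f_equal (@projT1 _ _) E2).
    subst sg'. have Ea := inj2 E2. subst a'.
    have Etau : tau = T2 by move: (f_equal (@projT1 _ _) E1) => /= [].
    subst T2. have Ef := inj2 E1. by subst f'.
  - move=> I x s tau f _ IH T2 v2 /ev_Lam_inv [tau' [f' [-> H]]].
    have [a0] := dom_ne F (nty x).
    have E := IH a0 _ _ (H a0).
    have Etau : tau = tau' by move: (f_equal (@projT1 _ _) E).
    subst tau'. congr existT. apply: app_ext => a.
    exact: inj2 (IH a _ _ (H a)).
Qed.

Lemma eval_fun' (I : valuation F) s T (v1 v2 : dom F T) :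
  eval I s v1 -> eval I s v2 -> v1 = v2.
Proof. move=> H1 H2. exact: inj2 (eval_fun H1 H2). Qed.


Lemma has_ty_N_inv x U : has_ty (N x) U -> U = nty x.
Proof. move=> H; by inversion H. Qed.

Lemma has_ty_App_inv s t U : has_ty (App s t) U -> exists sg, has_ty s (Arr sg U) /\ has_ty t sg.
Proof. move=> H; inversion H; subst; eauto. Qed.

Lemma has_ty_neg_inv s U : has_ty (neg s) U -> has_ty s (TO S) /\ U = (TO S).
Proof.
  move=> /has_ty_App_inv [sg [/has_ty_N_inv /= [-> ->] H]]. by [].
Qed.

Lemma has_ty_eqn_inv T s t U : has_ty (eqn T s t) U -> has_ty s T /\ has_ty t T.
Proof.
  move=> /has_ty_App_inv [sg [/has_ty_App_inv [sg' [/has_ty_N_inv /= [E1 E2 E3] H1] H2]]].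
  subst. by [].
Qed.

Lemma apps_sub h ts U : has_ty (apps h ts) U -> exists U', has_ty h U'.
Proof.
  elim: ts h => [|t ts IH] h /=; first by eauto.
  move=> /IH [U' /has_ty_App_inv [sg [H _]]]. eauto.
Qed.

Lemma has_ty_apps (g : ty S * (term S * term S) -> term S) l : forall h U T0,
  has_ty (apps h (map g l)) U -> has_ty h (arrows (map fst l) T0) ->
  forall p, In p l -> has_ty (g p) p.1.
Proof.
  elim: l => [|p l IH] h U T0 //= H Hh q Hq.
  have [U' /has_ty_App_inv [sg [H1 H2]]] := apps_sub H.
  have [E1 E2] : sg = p.1 /\ U' = arrows (map fst l) T0.
    by have := has_ty_uniq H1 Hh; case.
  subst. case: Hq => [<-|Hq] //.
  exact: (IH _ _ _ H (ty_App H1 H2)).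
Qed.

Lemma upd_same (I : valuation F) x (a : dom F (nty x)) : upd I a x = a.
Proof.
  rewrite /upd. case: (name_eq_dec x x) => [e|] //.
  by rewrite (UIP_dec (@name_eq_dec S) e erefl).
Qed.

Lemma upd_other (I : valuation F) x (a : dom F (nty x)) y : x <> y -> upd I a y = I y.
Proof. rewrite /upd. by case: (name_eq_dec x y). Qed.

Lemma eval_agree (I : valuation F) s T (v : dom F T) : eval I s v ->
  forall I', (forall y, (~ is_var y \/ free y s) -> I y = I' y) -> eval I' s v.
Proof.
  elim => {I s T v}.
  - move=> I x I' Hag. rewrite Hag; last first.
      case: x Hag => [U n| |U] _ /=; by [right | left].
    exact: ev_N.
  - move=> I s t sg tau f a _ IH1 _ IH2 I' Hag.
    apply: ev_App; [apply: IH1 | apply: IH2] => y Hy; apply: Hag; case: Hy => /=; tauto.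
  - move=> I x s tau f _ IH I' Hag. apply: ev_Lam => a. apply: IH => y Hy.
    rewrite /upd. case: (name_eq_dec x y) => [//|ne]. apply: Hag.
    case: Hy => /=; tauto.
Qed.

Lemma interp_upd (I : valuation F) x (a : dom F (nty x)) :
  interpretation I -> interpretation (upd I a).
Proof.
  move=> HI s T Hs.
  have [f /ev_Lam_inv [tau [g [E Hg]]]] := HI _ _ (ty_Lam x Hs).
  have : Arr (nty x) T = Arr (nty x) tau by move: (f_equal (@projT1 _ _) E).
  move=> Ee; injection Ee => Et; subst tau. eauto.
Qed.

Definition tru (I : valuation F) (tv : dom F (TO S) -> bool) s :=
  exists v : dom F (TO S), eval I s v /\ tv v = true.

Definition model (I : valuation F) tv (A : term S -> Prop) :=
  interpretation I /\ logical I tv /\ forall s, A s -> tru I tv s.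

Lemma ev_neg_inv (I : valuation F) s (w : dom F (TO S)) : eval I (neg s) w ->
  exists b : dom F (TO S), eval I s b /\ w = Defs.app (I (NegC S)) b.
Proof.
  move=> /ev_App_inv [sg [f [a [/ev_N_inv E [H ->]]]]].
  have : Arr sg (TO S) = Arr (TO S) (TO S) by move: (f_equal (@projT1 _ _) E).
  case=> Esg; subst sg. have := inj2 E => /= ->. eauto.
Qed.

Lemma ev_eqn_inv (I : valuation F) T s t (w : dom F (TO S)) : eval I (eqn T s t) w ->
  exists a b : dom F T, eval I s a /\ eval I t b /\
    w = Defs.app (Defs.app (I (EqC T)) a) b.
Proof.
  move=> /ev_App_inv [sg [f [b [/ev_App_inv [sg' [f' [a [/ev_N_inv E [H ->]]]]] [Hb ->]]]]].
  have : Arr sg' (Arr sg (TO S)) = Arr T (Arr T (TO S)) by move: (f_equal (@projT1 _ _) E).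
  case=> E1 E2; subst sg sg'. have := inj2 E => /= ->. by do 2 eexists; eauto.
Qed.

Lemma ev_neg (I : valuation F) s (b : dom F (TO S)) : eval I s b ->
  eval I (neg s) (Defs.app (I (NegC S)) b).
Proof. move=> H. exact: (ev_App (ev_N I (NegC S)) H). Qed.

Lemma ev_eqn (I : valuation F) T s t (a b : dom F T) : eval I s a -> eval I t b ->
  eval I (eqn T s t) (Defs.app (Defs.app (I (EqC T)) a) b).
Proof. move=> Ha Hb. exact: (ev_App (ev_App (ev_N I (EqC T)) Ha) Hb). Qed.


Section Log.
Variables (I : valuation F) (tv : dom F (TO S) -> bool).
Hypothesis HL : logical I tv.

Lemma tru_neg s : tru I tv (neg s) <-> exists b, eval I s b /\ tv b = false.
Proof.
  case: HL => _ [Hn _]. split.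
  - move=> [w [/ev_neg_inv [b [Hb ->]]]]. rewrite Hn => /negbTE. eauto.
  - move=> [b [Hb Hf]]. exists (Defs.app (I (NegC S)) b). split; first exact: ev_neg.
    by rewrite Hn Hf.
Qed.

Lemma tru_eqn T s t : tru I tv (eqn T s t) <-> exists a b : dom F T, eval I s a /\ eval I t b /\ a = b.
Proof.
  case: HL => _ [_ He]. split.
  - move=> [w [/ev_eqn_inv [a [b [Ha [Hb ->]]]]]] /He E. eauto.
  - move=> [a [b [Ha [Hb E]]]]. eexists; split; first exact: ev_eqn Ha Hb.
    exact/He.
Qed.

Lemma tru_neq T s t : tru I tv (neq T s t) <-> exists a b : dom F T, eval I s a /\ eval I t b /\ a <> b.
Proof.
  case: HL => _ [_ He]. rewrite tru_neg. split.
  - move=> [w [/ev_eqn_inv [a [b [Ha [Hb ->]]]]]] Hf. do 2 eexists; do 2 (split; eauto).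
    move=> E. move: (He _ a b) => [_ /(_ E)]. by rewrite Hf.
  - move=> [a [b [Ha [Hb E]]]]. eexists; split; first exact: ev_eqn Ha Hb.
    case H: (tv _) => //. by move: (He _ a b) => [/(_ H)].
Qed.

Lemma tru_atom s : tru I tv s <-> exists b, eval I s b /\ tv b = true.
Proof. by []. Qed.

End Log.

Definition sem_eq (I : valuation F) s t := forall T1 T2 (v1 : dom F T1) (v2 : dom F T2),
  eval I s v1 -> eval I t v2 -> existT (dom F) T1 v1 = existT (dom F) T2 v2.

Lemma sem_eq_App I s s' t t' : sem_eq I s s' -> sem_eq I t t' -> sem_eq I (App s t) (App s' t').
Proof.
  move=> H1 H2 T1 T2 v1 v2 /ev_App_inv [sg [f [a [Hf [Ha ->]]]]] /ev_App_inv [sg' [f' [a' [Hf' [Ha' ->]]]]].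
  have E2 := H2 _ _ _ _ Ha Ha'. have E1 := H1 _ _ _ _ Hf Hf'.
  have Esg : sg = sg' by move: (f_equal (@projT1 _ _) E2).
  subst sg'. have Ea := inj2 E2. subst a'.
  have Etau : T1 = T2 by move: (f_equal (@projT1 _ _) E1) => /= [].
  subst T2. have Ef := inj2 E1. by subst f'.
Qed.

Lemma sem_eq_apps I l : forall h1 h2, sem_eq I h1 h2 ->
  (forall p, In p l -> sem_eq I (lhs3 p) (rhs3 p)) ->
  sem_eq I (apps h1 (map (@lhs3 S) l)) (apps h2 (map (@rhs3 S) l)).
Proof.
  elim: l => [|p l IH] h1 h2 Hh Hl //=.
  apply: IH; last by move=> q Hq; apply: Hl; right.
  apply: sem_eq_App => //. apply: Hl. by left.
Qed.

Lemma sem_eq_refl I s : sem_eq I s s.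
Proof. move=> T1 T2 v1 v2 H1 H2. exact (eval_fun H1 H2). Qed.

Lemma neq_or_semeq I tv (HI : interpretation I) (HL : logical I tv) T s t :
  has_ty s T -> has_ty t T -> tru I tv (neq T s t) \/ sem_eq I s t.
Proof.
  move=> Hs Ht. have [a Ha] := HI _ _ Hs. have [b Hb] := HI _ _ Ht.
  case: (classic (a = b)) => [E|NE].
  - subst b. right => T1 T2 v1 v2 H1 H2.
    by rewrite -(eval_fun Ha H1) -(eval_fun Hb H2).
  - left. apply/tru_neq => //. eauto 6.
Qed.

End Sem.

Lemma sat_ext S (F : frame S) (I : valuation F) tv (A : term S -> Prop) alt :
  model I tv A -> (forall s, In s alt -> tru I tv s) -> satisfiable (fun s => A s \/ In s alt).
Proof.
  move=> [HI [HL HA]] Halt. exists F, I, tv. do 2 (split => //).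
  move=> s [/HA|/Halt] //.
Qed.

Lemma in1 {T} {x y : T} : In y [x] -> y = x.
Proof. by case=> [<-|[]]. Qed.

Lemma in2 {T} {x z y : T} : In y [x; z] -> y = x \/ y = z.
Proof. by case=> [<-|[<-|[]]]; [left|right]. Qed.

Lemma step S (nf : term S -> term S) (HN4 : N4 nf) A r alts :
  admitted nf A r alts -> satisfiable A ->
  exists alt, In alt alts /\ satisfiable (fun s => A s \/ In s alt).
Proof.
  move=> [Hbr [_ [Hinst _]]] [F [I [tv [HI [HL HA]]]]].
  have HM : model I tv A by [].
  have Hinj : injective tv by case: HL => /bij_inj.
  destruct Hinst as [s H|s t H|s t H|sg tau s t u H Hu Hn|sg tau s t x H Hx Hsg Hfree _
                    |x l Hx Hty H1 H2|a x l Hx Hty H|a s t u v H1 H2].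
  -
    have /(tru_neg HL) [b [Hb Hbf]] := HA _ H.
    have [c [Hc Ebc]] := ev_neg_inv Hb. subst b.
    exists [s]; split; first by left.
    apply: sat_ext HM _ => s' /in1 ->. exists c; split => //.
    case: HL => _ [Hn _]. move: Hbf; rewrite Hn. by case: (tv c).
  -
    have /(tru_eqn HL) [a [b [Ha [Hb E]]]] := HA _ H. subst b.
    case Ea: (tv a).
    + exists [s; t]; split; first by left.
      apply: sat_ext HM _ => s' /in2 [->|->]; by exists a.
    + exists [neg s; neg t]; split; first by right; left.
      apply: sat_ext HM _ => s' /in2 [->|->]; apply/(tru_neg HL); by exists a.
  -
    have /(tru_neq HL) [a [b [Ha [Hb E]]]] := HA _ H.
    case Ea: (tv a).
    + exists [s; neg t]; split; first by left.
      apply: sat_ext HM _ => s' /in2 [->|->]; first by exists a.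
      apply/(tru_neg HL). exists b; split => //.
      case Eb: (tv b) => //; exfalso; apply: E. apply: Hinj. by rewrite Ea Eb.
    + exists [neg s; t]; split; first by right; left.
      apply: sat_ext HM _ => s' /in2 [->|->]; last first.
        exists b; split => //. case Eb: (tv b) => //; exfalso; apply: E. apply: Hinj. by rewrite Ea Eb.
      apply/(tru_neg HL). by exists a.
  -
    have /(tru_eqn HL) [f [g [Hf [Hg E]]]] := HA _ H. subst g.
    have [Hs Ht] := has_ty_eqn_inv (proj1 (Hbr _ H)).
    have [c Hc] := HI _ _ Hu.
    exists [eqn tau (nf (App s u)) (nf (App t u))]; split; first by left.
    apply: sat_ext HM _ => s' /in1 ->. apply/(tru_eqn HL).
    exists (Defs.app f c), (Defs.app f c). split; last split => //.
    + apply/(HN4 _ _ HI _ _ _ (ty_App Hs Hu)). exact: ev_App Hf Hc.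
    + apply/(HN4 _ _ HI _ _ _ (ty_App Ht Hu)). exact: ev_App Hg Hc.
  -
    subst sg.
    have /(tru_neq HL) [f [g [Hf [Hg E]]]] := HA _ H.
    have [Hs Ht] := has_ty_eqn_inv (proj1 (has_ty_neg_inv (proj1 (Hbr _ H)))).
    have [c Hc] : exists c, Defs.app f c <> Defs.app g c.
      apply: NNPP => Hn. apply: E. apply: app_ext => c.
      apply: NNPP => Hc. apply: Hn. by exists c.
    set I' := upd I c.
    have Hxn : forall y, ~ is_var y -> x <> y by move=> y Hy Exy; subst y.
    have HI' : interpretation I' := interp_upd c HI.
    have HL' : logical I' tv.
      case: HL => [Hb [Hn He]]. split => //. rewrite /I' upd_other; last by case: (x) Hx.
      split => // T a b. rewrite upd_other //; by case: (x) Hx.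
    have Hag : forall r, A r -> forall y, ~ is_var y \/ free y r -> I y = I' y.
      move=> r Ar y Hy. rewrite /I' upd_other //. move=> Exy; subst y.
      case: Hy => [//|Hfr]. apply: Hfree. by exists r.
    have Hf' : eval I' s f.
      apply: (eval_agree Hf) => y Hy. apply: (Hag _ H). case: Hy => /=; tauto.
    have Hg' : eval I' t g.
      apply: (eval_agree Hg) => y Hy. apply: (Hag _ H). case: Hy => /=; tauto.
    have Hx' : eval I' (N x) c.
      have := ev_N I' x. by rewrite /I' upd_same.
    exists [neq tau (nf (App s (N x))) (nf (App t (N x)))]; split; first by left.
    exists F, I', tv. do 2 (split => //).
    move=> r [Ar|/in1 ->].
    + have [v [Hv Tv]] := HA _ Ar. exists v; split => //.
      exact: (eval_agree Hv (Hag _ Ar)).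
    + apply/(tru_neq HL'). exists (Defs.app f c), (Defs.app g c). split; last split => //.
      * apply/(HN4 _ _ HI' _ _ _ (ty_App Hs (ty_N x))). exact: ev_App Hf' Hx'.
      * apply/(HN4 _ _ HI' _ _ _ (ty_App Ht (ty_N x))). exact: ev_App Hg' Hx'.
  -
    have HxT : has_ty (N x) (arrows (map fst l) (TO S)) by rewrite -Hty; exact: ty_N.
    have Tl := has_ty_apps (proj1 (Hbr _ H1)) HxT.
    have Tr := has_ty_apps (proj1 (has_ty_neg_inv (proj1 (Hbr _ H2)))) HxT.
    apply: NNPP => Hno.
    have Hsem : forall p, In p l -> sem_eq I (lhs3 p) (rhs3 p).
      move=> p Hp. case: (neq_or_semeq HI HL (Tl p Hp) (Tr p Hp)) => // Ht.
      exfalso; apply: Hno. exists (alt3 p); split; first exact: in_map.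
      apply: sat_ext HM _ => s' /in1 ->. exact: Ht.
    have Hse := sem_eq_apps (sem_eq_refl (I:=I) (s:=N x)) Hsem.
    have [v [Hv Tv]] := HA _ H1.
    have /(tru_neg HL) [b [Hb Tb]] := HA _ H2.
    have Evb := inj2 (Hse _ _ _ _ Hv Hb). subst b. by rewrite Tv in Tb.
  -
    have HxT : has_ty (N x) (arrows (map fst l) (TS a)) by rewrite -Hty; exact: ty_N.
    have [HL1 HR1] := has_ty_eqn_inv (proj1 (has_ty_neg_inv (proj1 (Hbr _ H)))).
    have Tl := has_ty_apps HL1 HxT.
    have Tr := has_ty_apps HR1 HxT.
    apply: NNPP => Hno.
    have Hsem : forall p, In p l -> sem_eq I (lhs3 p) (rhs3 p).
      move=> p Hp. case: (neq_or_semeq HI HL (Tl p Hp) (Tr p Hp)) => // Ht.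
      exfalso; apply: Hno. exists (alt3 p); split; first exact: in_map.
      apply: sat_ext HM _ => s' /in1 ->. exact: Ht.
    have Hse := sem_eq_apps (sem_eq_refl (I:=I) (s:=N x)) Hsem.
    have /(tru_neq HL) [a1 [b1 [Ha1 [Hb1 E]]]] := HA _ H.
    apply: E. exact: inj2 (Hse _ _ _ _ Ha1 Hb1).
  -
    have /(tru_eqn HL) [c1 [c2 [Hc1 [Hc2 E]]]] := HA _ H1. subst c2.
    have /(tru_neq HL) [d1 [d2 [Hd1 [Hd2 E2]]]] := HA _ H2.
    case: (classic (c1 = d1)) => Ec.
    + subst d1. exists [neq (TS a) s v; neq (TS a) t v]; split; first by right; left.
      apply: sat_ext HM _ => s' /in2 [->|->]; apply/(tru_neq HL); exists c1, d2; by do 2 (split => //).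
    + exists [neq (TS a) s u; neq (TS a) t u]; split; first by left.
      apply: sat_ext HM _ => s' /in2 [->|->]; apply/(tru_neq HL); exists c1, d1; by do 2 (split => //).
Qed.

Unset Implicit Arguments.
Theorem proposition5p1 (S : countType) (nf : term S -> term S)
  (Htp : nf_type_preserving nf) (HN1 : N1 nf) (HN2 : N2 nf)
  (HN3 : N3 nf) (HN4 : N4 nf) (A : term S -> Prop) :
  refutable nf A -> ~ satisfiable A.
Proof.
  elim => A' r alts Hadm _ IH Hsat.
  have [alt [Hin Hs]] := step HN4 Hadm Hsat.
  exact: IH alt Hin Hs.
Qed.
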